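(* Let $(\lambda,v)$ be an exact eigenpair of the eigenvalue problem on $V$ (so $\langle v,v\rangle=1$), with $\lambda$ simple, and let $\mathfrak V^{(k)}\subset V$ be a finite-dimensional subspace with Galerkin eigenpairs $(\bar\lambda_j^{(k)},\bar v_j^{(k)})_{j=1}^{N_k}$. Let $i$ be an index such that $1/\bar\lambda_i^{(k)}$ is the closest of the numbers $1/\bar\lambda_j^{(k)}$ to $1/\lambda$, and assume $\delta_\lambda^{(k)}:=\min_{j\neq i}\big|\frac1{\bar\lambda_j^{(k)}}-\frac1\lambda\big|>0$. Let $E_{i,k}:V\to\operatorname{span}\{\bar v_i^{(k)}\}$ be defined by $\langle E_{i,k}w,\bar v_i^{(k)}\rangle=\langle w,\bar v_i^{(k)}\rangle$ for all $w\in V$. Then $$\|E_{i,k}v-v\|\le\sqrt{1+\frac{1}{\lambda_1(\delta_\lambda^{(k)})^2}\eta^2(\mathfrak V^{(k)})}\;\delta_k(\lambda),$$ $$\|E_{i,k}v-v\|_0\le\Big(1+\frac1{\lambda_1\delta_\lambda^{(k)}}\Big)\eta(\mathfrak V^{(k)})\,\|E_{i,k}v-v\|.$$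
   Context: Let $V\subset V_0\subset V^*$ be real Hilbert spaces forming a Gelfand triple ($V^*$ the dual of $V$; the pairing $[\cdot,\cdot]$ between $V^*$ and $V$ extends the inner product of $V_0$, whose norm is $\|\cdot\|_0$; $V_0\to V^*$ compact and dense). $\mathcal L:V\to V^*$ is a symmetric positive linear bijection; $\langle u,w\rangle:=[\mathcal Lu,w]$, $\|u\|^2=\langle u,u\rangle$. (In the paper $V$ is finite-dimensional.) Eigenvalue problem: find $(\lambda,v)\in\mathbb R\times V$ with $\langle v,v\rangle=1$ and $\langle v,w\rangle=\lambda[v,w]$ for all $w\in V$; its eigenvalues are $0<\lambda_1\le\lambda_2\le\cdots$, and $\lambda_1=\min_{0\ne w\in V}\langle w,w\rangle/[w,w]$. $M(\lambda)$ denotes the eigenspace of $\lambda$. For a subspace $\mathfrak V^{(k)}$ with $N_k=\dim\mathfrak V^{(k)}$, the Galerkin problem is: find $(\bar\lambda,\bar v)\in\mathbb R\times\mathfrak V^{(k)}$ with $\langle\bar v,\bar v\rangle=1$ and $\langle\bar v,w\rangle=\bar\lambda[\bar v,w]$ for all $w\in\mathfrak V^{(k)}$; its eigenpairs are $(\bar\lambda_j^{(k)},\bar v_j^{(k)})$, $j=1,\dots,N_k$, with $0<\bar\lambda_1^{(k)}\le\dots\le\bar\lambda_{N_k}^{(k)}$ and $\langle\bar v_i^{(k)},\bar v_j^{(k)}\rangle=\delta_{ij}$. $\eta(\mathfrak V^{(k)}):=\sup_{f\in V_0,\|f\|_0=1}\inf_{w\in\mathfrak V^{(k)}}\|\mathcal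 L^{-1}f-w\|$; $\delta_k(\lambda):=\sup_{u\in M(\lambda),\|u\|=1}\inf_{w\in\mathfrak V^{(k)}}\|u-w\|$. *)

(* Defs.v *)
From HB Require Import structures.
From mathcomp Require Import all_boot all_order all_algebra.
From mathcomp Require Import boolp classical_sets reals.
Set Implicit Arguments. Unset Strict Implicit. Unset Printing Implicit Defensive.
Import Order.TTheory GRing.Theory Num.Theory.
Local Open Scope ring_scope.
Local Open Scope classical_set_scope.

(* Since V is finite-dimensional,
   the Gelfand triple collapses as sets (V = V_0 = V^* ), V_0 carrying the
   inner product [u,w] = u M w^T, and the energy inner product
   <u,w> = [L u, w] = u A w^T, with A, M symmetric positive definite. *)

Section Defs.
Variables (R : realType) (n : nat).

Definition bform (B : 'M[R]_n) (u w : 'rV[R]_n) : R := (u *m B *m w^T) 0 0.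

Definition sym_posdef (B : 'M[R]_n) : Prop :=
  B^T = B /\ forall u : 'rV[R]_n, u != 0 -> 0 < bform B u u.

Definition normf (B : 'M[R]_n) (u : 'rV[R]_n) : R := Num.sqrt (bform B u u).

(* L^{-1} f : the u in V with <u,w> = [f,w] for all w, i.e. u A = f M. *)
Definition Linv (A M : 'M[R]_n) (f : 'rV[R]_n) : 'rV[R]_n := f *m M *m invmx A.

Definition eigsp (A M : 'M[R]_n) (lam : R) : set 'rV[R]_n :=
  [set u | forall w, bform A u w = lam * bform M u w].

Definition lambda1 (A M : 'M[R]_n) : R :=
  inf [set r | exists w : 'rV[R]_n, w != 0 /\ r = bform A w w / bform M w w].

Definition distA m (A : 'M[R]_n) (S : 'M[R]_(m, n)) (x : 'rV[R]_n) : R :=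
  inf [set r | exists w : 'rV[R]_n, (w <= S)%MS /\ r = normf A (x - w)].

Definition etaV m (A M : 'M[R]_n) (S : 'M[R]_(m, n)) : R :=
  sup [set r | exists f : 'rV[R]_n, normf M f = 1 /\ r = distA A S (Linv A M f)].

Definition delta_k m (A M : 'M[R]_n) (S : 'M[R]_(m, n)) (lam : R) : R :=
  sup [set r | exists u, eigsp A M lam u /\ normf A u = 1 /\ r = distA A S u].

Definition delta_gap N (lb : 'I_N -> R) (i : 'I_N) (lam : R) : R :=
  inf [set r | exists j : 'I_N, j != i /\ r = `|(lb j)^-1 - lam^-1|].

End Defs.

(* Main.v *)
Require Import Defs.
From HB Require Import structures.
From mathcomp Require Import all_boot all_order all_algebra.
From mathcomp Require Import boolp classical_sets reals.
From mathcomp Require Import ring lra.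
Import Order.TTheory GRing.Theory Num.Theory.
Local Open Scope ring_scope.
Local Open Scope classical_set_scope.

Section Aux.
Variables (R : realType) (n : nat).
Implicit Types (B : 'M[R]_n) (u w x y z : 'rV[R]_n).

Lemma bformDl B u1 u2 w : bform B (u1 + u2) w = bform B u1 w + bform B u2 w.
Proof. by rewrite /bform !mulmxDl mxE. Qed.
Lemma bformDr B u w1 w2 : bform B u (w1 + w2) = bform B u w1 + bform B u w2.
Proof. by rewrite /bform linearD /= mulmxDr mxE. Qed.
Lemma bformZl B a u w : bform B (a *: u) w = a * bform B u w.
Proof. by rewrite /bform -!scalemxAl mxE. Qed.
Lemma bformZr B a u w : bform B u (a *: w) = a * bform B u w.
Proof. by rewrite /bform linearZ /= -scalemxAr mxE. Qed.
Lemma bformNl B u w : bform B (- u) w = - bform B u w.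
Proof. by rewrite -scaleN1r bformZl mulN1r. Qed.
Lemma bformNr B u w : bform B u (- w) = - bform B u w.
Proof. by rewrite -scaleN1r bformZr mulN1r. Qed.
Lemma bformBl B u1 u2 w : bform B (u1 - u2) w = bform B u1 w - bform B u2 w.
Proof. by rewrite bformDl bformNl. Qed.
Lemma bformBr B u w1 w2 : bform B u (w1 - w2) = bform B u w1 - bform B u w2.
Proof. by rewrite bformDr bformNr. Qed.
Lemma bform0l B w : bform B 0 w = 0.
Proof. by rewrite /bform !mul0mx mxE. Qed.
Lemma bform0r B u : bform B u 0 = 0.
Proof. by rewrite /bform linear0 mulmx0 mxE. Qed.
Lemma bform_suml B (I : finType) (P : pred I) (F : I -> 'rV[R]_n) w :
  bform B (\sum_(j | P j) F j) w = \sum_(j | P j) bform B (F j) w.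
Proof.
elim/big_rec2: _ => [|j a b _ <-]; first by rewrite bform0l.
by rewrite bformDl.
Qed.
Lemma bform_sumr B (I : finType) (P : pred I) (F : I -> 'rV[R]_n) u :
  bform B u (\sum_(j | P j) F j) = \sum_(j | P j) bform B u (F j).
Proof.
elim/big_rec2: _ => [|j a b _ <-]; first by rewrite bform0r.
by rewrite bformDr.
Qed.
Lemma bformC B u w : B^T = B -> bform B u w = bform B w u.
Proof.
move=> hB; rewrite /bform.
transitivity ((u *m B *m w^T)^T 0 0); first by rewrite [RHS]mxE.
by rewrite !trmx_mul trmxK hB mulmxA.
Qed.

Lemma bform_ge0 B u : sym_posdef B -> 0 <= bform B u u.
Proof.
move=> [_ hB]; have [->|hu] := eqVneq u 0; first by rewrite bform0l.
exact/ltW/hB.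
Qed.

Lemma bform_eq0 B u : sym_posdef B -> bform B u u = 0 -> u = 0.
Proof.
move=> [_ hB] h; apply/eqP; apply: contraT => hu.
by have := hB u hu; rewrite h ltxx.
Qed.

Lemma bform_CS B u w : sym_posdef B ->
  bform B u w ^+ 2 <= bform B u u * bform B w w.
Proof.
move=> hB; have [->|hw] := eqVneq w 0.
  by rewrite !bform0r expr2 mul0r mulr0.
have cpos : 0 < bform B w w.
  by case: hB => _ h; apply: h.
set c := bform B w w; set b := bform B u w; set a := bform B u u.
have := bform_ge0 _ (c *: u - b *: w) hB.
rewrite !bformBl !bformBr !bformZl !bformZr -/a -/c -/b.
rewrite (bformC _ _ _ hB.1) -/b => h.
have e : c * (c * a) - c * (b * b) - (b * (c * b) - b * (b * c)) = c * (a * c - b ^+ 2) by ring.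
rewrite e pmulr_rge0 // in h.
by rewrite -subr_ge0.
Qed.

Lemma bform_CSn B u w : sym_posdef B ->
  `|bform B u w| <= normf B u * normf B w.
Proof.
move=> hB; rewrite /normf -sqrtrM ?bform_ge0 // -sqrtr_sqr.
by rewrite ler_wsqrtr // bform_CS.
Qed.

Lemma posdef_unit B : sym_posdef B -> B \in unitmx.
Proof.
move=> hB; rewrite -row_free_unit; apply/inj_row_free => u hu.
by apply: (bform_eq0 _ _ hB); rewrite /bform hu mul0mx mxE.
Qed.

Lemma Linv_bform (A M : 'M[R]_n) f w : A \in unitmx ->
  bform A (Linv A M f) w = bform M f w.
Proof. by move=> hA; rewrite /bform /Linv mulmxKV. Qed.

Lemma LinvZ (A M : 'M[R]_n) a f : Linv A M (a *: f) = a *: Linv A M f.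
Proof. by rewrite /Linv -!scalemxAl. Qed.


Definition sqn u := bform 1%:M u u.

Lemma sqnE u : sqn u = \sum_k u 0 k ^+ 2.
Proof. rewrite /sqn /bform mulmx1 mxE; by apply: eq_bigr => k _; rewrite /trmx mxE expr2. Qed.

Lemma sqn_ge0 u : 0 <= sqn u.
Proof. by rewrite sqnE sumr_ge0 // => k _; rewrite sqr_ge0. Qed.

Lemma coord_le_sqn u k : u 0 k ^+ 2 <= sqn u.
Proof.
rewrite sqnE (bigD1 k) //= lerDl sumr_ge0 // => j _; exact: sqr_ge0.
Qed.

Lemma bform_expand B u : bform B u u = \sum_i \sum_j u 0 i * B i j * u 0 j.
Proof.
rewrite /bform mxE exchange_big /=; apply: eq_bigr => j _.
by rewrite !mxE mulr_suml; apply: eq_bigr => i _.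
Qed.

Definition Kb B := 2 * \sum_i \sum_j `|B i j| + 1.

Lemma Kb_gt0 B : 0 < Kb B.
Proof.
by rewrite /Kb ltr_pwDr // mulr_ge0 // sumr_ge0 // => i _; rewrite sumr_ge0.
Qed.

Lemma bform_le_sqn B u : bform B u u <= Kb B * sqn u.
Proof.
apply: (le_trans (ler_norm _)); rewrite bform_expand.
apply: (le_trans (ler_norm_sum _ _ _)).
apply: (@le_trans _ _ ((2 * \sum_i \sum_j `|B i j|) * sqn u)); last first.
  by rewrite ler_wpM2r ?sqn_ge0 // /Kb lerDl.
have -> : (2 * \sum_i \sum_j `|B i j|) * sqn u = \sum_i \sum_j (`|B i j| * (2 * sqn u)).
  rewrite mulrAC mulr_sumr; apply: eq_bigr => i _; rewrite mulr_sumr.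
  by apply: eq_bigr => j _; rewrite mulrC.
apply: ler_sum => i _.
apply: (le_trans (ler_norm_sum _ _ _)).
apply: ler_sum => j _.
rewrite !normrM.
have h1 := coord_le_sqn u i; have h2 := coord_le_sqn u j.
have h3 : `|u 0 i| * `|u 0 j| <= 2 * sqn u.
  have e1 : u 0 i ^+ 2 = `|u 0 i| ^+ 2 by rewrite real_normK ?num_real.
  have e2 : u 0 j ^+ 2 = `|u 0 j| ^+ 2 by rewrite real_normK ?num_real.
  rewrite e1 in h1; rewrite e2 in h2.
  nra.
have hb := normr_ge0 (B i j).
nra.
Qed.

Lemma sqn_le_bform A : sym_posdef A -> forall u, sqn u <= Kb (invmx A) * bform A u u.
Proof.
move=> hA u; have hU := posdef_unit _ hA.
set y := u *m invmx A.
have e1 : sqn u = bform A u y.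
  rewrite /sqn /bform /y trmx_mul trmx_inv hA.1 mulmxA mulmxK //.
  by rewrite mulmx1.
have e2 : bform A y y = bform (invmx A) u u.
  rewrite /bform /y trmx_mul trmx_inv hA.1 mulmxA mulmxKV //.
have hCS := bform_CS _ u y hA.
rewrite -e1 e2 in hCS.
have hb := bform_le_sqn (invmx A) u.
have hs := sqn_ge0 u.
have hq := bform_ge0 _ u hA.
have hK := Kb_gt0 (invmx A).
have [s0|spos] := eqVneq (sqn u) 0.
  by rewrite s0 mulr_ge0 // ltW.
have spos' : 0 < sqn u by rewrite lt_def spos hs.
have : sqn u * sqn u <= (Kb (invmx A) * bform A u u) * sqn u.
  rewrite -expr2; apply: (le_trans hCS).
  nra.
by rewrite ler_pM2r.
Qed.

Lemma posdef_compare A M : sym_posdef A -> sym_posdef M ->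
  exists2 C, 0 < C & forall u, bform M u u <= C * bform A u u.
Proof.
move=> hA hM; exists (Kb M * Kb (invmx A)); first by rewrite mulr_gt0 // Kb_gt0.
move=> u; apply: (le_trans (bform_le_sqn M u)).
by rewrite -mulrA ler_wpM2l ?sqn_le_bform // ltW // Kb_gt0.
Qed.


Lemma normfZ B c x : normf B (c *: x) = `|c| * normf B x.
Proof.
by rewrite /normf bformZl bformZr mulrA -expr2 sqrtrM ?sqr_ge0 // sqrtr_sqr.
Qed.

Lemma subS m (S : 'M[R]_(m, n)) x y : (x <= S)%MS -> (y <= S)%MS -> (x - y <= S)%MS.
Proof. by move=> hx hy; rewrite addmx_sub // -scaleN1r scalemx_sub. Qed.

Lemma pyth A x y : sym_posdef A -> bform A x y = 0 ->
  bform A (x + y) (x + y) = bform A x x + bform A y y.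
Proof.
move=> hA h; rewrite !bformDl !bformDr h (bformC _ y x hA.1) h.
by rewrite addr0 add0r.
Qed.

Section Proj.
Variables (A : 'M[R]_n) (m Nk : nat) (S : 'M[R]_(m, n)) (vb : 'I_Nk -> 'rV[R]_n).
Hypotheses (hA : sym_posdef A) (hrank : \rank S = Nk)
  (hsub : forall j, (vb j <= S)%MS)
  (hon : forall j1 j2, bform A (vb j1) (vb j2) = (j1 == j2)%:R).

Definition Pr w := \sum_j bform A w (vb j) *: vb j.

Lemma orth_coef (a : 'I_Nk -> R) k : bform A (\sum_j a j *: vb j) (vb k) = a k.
Proof.
rewrite bform_suml (bigD1 k) //= bformZl hon eqxx mulr1 big1 ?addr0 // => j hj.
by rewrite bformZl hon (negbTE hj) mulr0.
Qed.

Lemma span_S z : (z <= S)%MS -> z = Pr z.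
Proof.
move=> hz.
pose B := \matrix_(j < Nk) vb j.
have hBS : (B <= S)%MS by apply/row_subP => j; rewrite rowK.
have hfree : row_free B.
  apply/row_freeP; exists (A *m B^T); apply/matrixP => j1 j2.
  transitivity ((row j1 (B *m (A *m B^T))) 0 j2); first by rewrite [RHS]mxE.
  rewrite row_mul rowK mulmxA.
  transitivity ((col j2 (vb j1 *m A *m B^T)) 0 0); first by rewrite [RHS]mxE.
  rewrite colE -mulmxA -colE -tr_row rowK.
  rewrite -/(bform A (vb j1) (vb j2)) hon mxE.
  by case: (j1 == j2).
have hSB : (S <= B)%MS.
  by rewrite -(mxrank_leqif_sup hBS).2 (eqP hfree) hrank.
have /submxP [D ->] : (z <= B)%MS by apply: submx_trans hz hSB.
rewrite mulmx_sum_row /Pr.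
have e : forall j, row j B = vb j by move=> j; rewrite rowK.
under eq_bigr => j _ do rewrite e.
by apply: eq_bigr => j _; rewrite orth_coef.
Qed.

Lemma Pr_sub w : (Pr w <= S)%MS.
Proof. by apply: summx_sub => j _; apply: scalemx_sub. Qed.

Lemma Pr_coef w k : bform A (Pr w) (vb k) = bform A w (vb k).
Proof. by rewrite /Pr orth_coef. Qed.

Lemma Pr_orth w z : (z <= S)%MS -> bform A (w - Pr w) z = 0.
Proof.
move=> hz; rewrite (span_S _ hz) /Pr bform_sumr big1 // => j _.
by rewrite bformZr bformBl -/(Pr w) Pr_coef subrr mulr0.
Qed.

Lemma Pr_orth' w z : (z <= S)%MS -> bform A z (w - Pr w) = 0.
Proof. by move=> hz; rewrite (bformC _ _ _ hA.1) Pr_orth. Qed.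

Lemma Pr_Z a w : Pr (a *: w) = a *: Pr w.
Proof.
rewrite /Pr scaler_sumr; apply: eq_bigr => j _.
by rewrite bformZl scalerA.
Qed.

Lemma Pr_N w : Pr (- w) = - Pr w.
Proof. by rewrite -scaleN1r Pr_Z scaleN1r. Qed.

Lemma dist_ge w z : (z <= S)%MS ->
  bform A (w - Pr w) (w - Pr w) <= bform A (w - z) (w - z).
Proof.
move=> hz.
have -> : w - z = (w - Pr w) + (Pr w - z) by rewrite addrA subrK.
rewrite (pyth _ (w - Pr w) (Pr w - z) hA) ?lerDl ?bform_ge0 //.
by apply: Pr_orth; apply: subS => //; apply: Pr_sub.
Qed.

Lemma distA_eq w : distA A S w = normf A (w - Pr w).
Proof.
have mem : [set r | exists w0 : 'rV[R]_n, (w0 <= S)%MS /\ r = normf A (w - w0)]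
   (normf A (w - Pr w)) by exists (Pr w); split => //; apply: Pr_sub.
have hlb : has_lbound [set r | exists w0 : 'rV[R]_n, (w0 <= S)%MS /\ r = normf A (w - w0)].
  by exists 0 => r [w0 [_ ->]]; rewrite /normf sqrtr_ge0.
apply/le_anti/andP; split.
  by apply: ge_inf.
apply: lb_le_inf; first by eexists; exact: mem.
move=> r [w0 [hw0 ->]]; rewrite /normf; apply: ler_wsqrtr.
exact: dist_ge.
Qed.

End Proj.

Lemma lambda1_pos (A M : 'M[R]_n) : sym_posdef A -> sym_posdef M ->
  (exists w : 'rV[R]_n, w != 0) -> 0 < lambda1 A M.
Proof.
move=> hA hM [w0 hw0].
have [C hC hCb] := posdef_compare _ _ hA hM.
apply: (@lt_le_trans _ _ C^-1); first by rewrite invr_gt0.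
apply: lb_le_inf.
  by exists (bform A w0 w0 / bform M w0 w0); exists w0.
move=> r [w [hw ->]].
have hb : 0 < bform M w w by apply: hM.2.
rewrite ler_pdivlMr //.
rewrite -(ler_pM2l hC) mulrA mulfV ?gt_eqF // mul1r.
exact: hCb.
Qed.

Lemma lambda1_le (A M : 'M[R]_n) : sym_posdef A -> sym_posdef M -> forall w,
  lambda1 A M * bform M w w <= bform A w w.
Proof.
move=> hA hM w.
have [->|hw] := eqVneq w 0; first by rewrite !bform0l mulr0.
have hb : 0 < bform M w w by apply: hM.2.
rewrite -ler_pdivlMr //.
apply: ge_inf; last by exists w.
exists 0 => r [w1 [hw1 ->]].
by rewrite divr_ge0 // ?bform_ge0.
Qed.

End Aux.
Arguments Pr {R n} A {Nk} vb w.

Lemma eta_bound (R : realType) (n : nat) (A M : 'M[R]_n) (m Nk : nat)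
  (S : 'M[R]_(m, n)) (vb : 'I_Nk -> 'rV[R]_n) :
  sym_posdef A -> sym_posdef M -> \rank S = Nk ->
  (forall j, (vb j <= S)%MS) ->
  (forall j1 j2, bform A (vb j1) (vb j2) = (j1 == j2)%:R) ->
  (exists w : 'rV[R]_n, w != 0) ->
  0 <= etaV A M S /\
  forall f, bform A (Linv A M f - Pr A vb (Linv A M f)) (Linv A M f - Pr A vb (Linv A M f))
            <= etaV A M S ^+ 2 * bform M f f.
Proof.
move=> hA hM hrank hsub hon hn.
have hU := posdef_unit _ _ A hA.
have hl1 := lambda1_pos _ _ A M hA hM hn.
have hl1le := lambda1_le _ _ A M hA hM.
pose Q f := Linv A M f - Pr A vb (Linv A M f).
have hQZ : forall a f, Q (a *: f) = a *: Q f.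
  by move=> a f; rewrite /Q LinvZ Pr_Z scalerBr.
have hqZ : forall (B : 'M[R]_n) (a : R) (x : 'rV[R]_n), bform B (a *: x) (a *: x) = a ^+ 2 * bform B x x.
  by move=> B a x; rewrite bformZl bformZr mulrA expr2.
have hQle : forall f, bform A (Q f) (Q f) <= bform A (Linv A M f) (Linv A M f).
  move=> f; set x := Linv A M f.
  have -> : bform A x x = bform A (Q f + Pr A vb x) (Q f + Pr A vb x) by rewrite /Q subrK.
  rewrite pyth // ?lerDl ?bform_ge0 //.
  exact: (Pr_orth _ _ A m Nk S vb hrank hsub hon x _ (Pr_sub _ _ A m Nk S vb hsub x)).
have hLb : forall f, lambda1 A M * bform A (Linv A M f) (Linv A M f) <= bform M f f.
  move=> f; set x := Linv A M f.
  have e1 : bform A x x = bform M f x by rewrite /x Linv_bform.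
  have hcs := bform_CS _ _ M f x hM.
  have h2 := hl1le x.
  have h3 := bform_ge0 _ _ M f hM.
  have h4 := bform_ge0 _ _ A x hA.
  rewrite -e1 in hcs.
  have [h0|hpos] := eqVneq (bform A x x) 0; first by rewrite h0 mulr0.
  have hp : 0 < bform A x x by rewrite lt_def hpos h4.
  rewrite -(ler_pM2r hp).
  have hMx := bform_ge0 _ _ M x hM.
  nra.
set X := [set r | exists f, normf M f = 1 /\ r = distA A S (Linv A M f)].
have hub : has_ubound X.
  exists (Num.sqrt (lambda1 A M)^-1) => r [f [hf ->]].
  rewrite (distA_eq _ _ A m Nk S vb hA hrank hsub hon) /normf -/(Q f).
  apply: ler_wsqrtr; apply: (le_trans (hQle f)).
  have hf1 : bform M f f = 1.
    by rewrite -[bform M f f]sqr_sqrtr ?(bform_ge0 _ _ M f hM) // -/(normf M f) hf expr1n.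
  rewrite -(ler_pM2l hl1) mulfV ?gt_eqF // -hf1.
  exact: hLb.
have key : forall f, 0 < bform M f f ->
    0 <= etaV A M S /\ bform A (Q f) (Q f) <= etaV A M S ^+ 2 * bform M f f.
  move=> f hf.
  set s := Num.sqrt (bform M f f).
  have hs : 0 < s by rewrite sqrtr_gt0.
  have hs2 : s ^+ 2 = bform M f f by rewrite sqr_sqrtr // ltW.
  have hf' : normf M (s^-1 *: f) = 1.
    rewrite /normf hqZ exprVn hs2 mulVf ?sqrtr1 //.
    by rewrite gt_eqF.
  have hmem : X (normf A (Q (s^-1 *: f))).
    exists (s^-1 *: f); split => //.
    by rewrite (distA_eq _ _ A m Nk S vb hA hrank hsub hon).
  have hle : normf A (Q (s^-1 *: f)) <= etaV A M S := ub_le_sup hub hmem.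
  have hN0 : 0 <= normf A (Q (s^-1 *: f)) by apply: sqrtr_ge0.
  split; first exact: le_trans hN0 hle.
  have hq : bform A (Q (s^-1 *: f)) (Q (s^-1 *: f)) <= etaV A M S ^+ 2.
    rewrite -(sqr_sqrtr (bform_ge0 _ _ A _ hA)).
    rewrite -/(normf A _).
    nra.
  rewrite hQZ hqZ exprVn in hq.
  rewrite -hs2.
  rewrite -(ler_pM2l (_ : 0 < (s ^+ 2)^-1)) ?invr_gt0 ?exprn_gt0 //.
  by rewrite mulrCA mulVf ?mulr1 // gt_eqF // exprn_gt0.
have [w0 hw0] := hn.
have hw0M : 0 < bform M w0 w0 by apply: hM.2.
have heta0 := (key w0 hw0M).1.
split => // f.
have [hf0|hfpos] := eqVneq (bform M f f) 0.
  have -> : f = 0 by apply: (bform_eq0 _ _ M f hM).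
  rewrite -/(Q 0).
  have -> : Q 0 = 0.
    have e0 : (0 : 'rV[R]_n) = 0 *: 0 by rewrite scale0r.
    by rewrite e0 hQZ scale0r.
  by rewrite bform0l bform0l mulr0.
have hfp : 0 < bform M f f by rewrite lt_def hfpos bform_ge0.
exact: (key f hfp).2.
Qed.

Theorem lemma3 (R : realType) (n : nat) (A M : 'M[R]_n)
  (lam : R) (v : 'rV[R]_n)
  (m Nk : nat) (S : 'M[R]_(m, n))
  (lb : 'I_Nk -> R) (vb : 'I_Nk -> 'rV[R]_n)
  (i : 'I_Nk) (E : 'rV[R]_n -> 'rV[R]_n) :
  (* Gelfand-triple data in finite dimension *)
  sym_posdef A -> sym_posdef M ->
  (* (lam, v) exact eigenpair, lam simple *)
  bform A v v = 1 ->
  (forall w, bform A v w = lam * bform M v w) ->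
  (forall u, eigsp A M lam u -> exists c : R, u = c *: v) ->
  (* Galerkin eigenpairs on Vk = row space of S, N_k = dim Vk *)
  \rank S = Nk ->
  (forall j, (vb j <= S)%MS) ->
  (forall j1 j2, bform A (vb j1) (vb j2) = (j1 == j2)%:R) ->
  (forall j w, (w <= S)%MS -> bform A (vb j) w = lb j * bform M (vb j) w) ->
  (forall j, 0 < lb j) ->
  (forall j1 j2 : 'I_Nk, (j1 <= j2)%N -> lb j1 <= lb j2) ->
  (* choice of i and spectral gap *)
  (forall j, `|(lb i)^-1 - lam^-1| <= `|(lb j)^-1 - lam^-1|) ->
  0 < delta_gap lb i lam ->
  (* E_{i,k} : V -> span{vb i}, <E w, vb i> = <w, vb i> *)
  (forall w, exists c : R, E w = c *: vb i) ->
  (forall w, bform A (E w) (vb i) = bform A w (vb i)) ->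
  normf A (E v - v) <=
    Num.sqrt (1 + (lambda1 A M * delta_gap lb i lam ^+ 2)^-1 * etaV A M S ^+ 2)
      * delta_k A M S lam
  /\
  normf M (E v - v) <=
    (1 + (lambda1 A M * delta_gap lb i lam)^-1) * etaV A M S * normf A (E v - v).
Proof.
move=> hA hM hvv heig hsimple hrank hsub hon hgal hlbpos _ _ hdpos hE1 hE2.
pose P := Pr A vb.
have hU := posdef_unit _ _ A hA.
have PrS : forall z, (z <= S)%MS -> z = P z := span_S _ _ A m Nk S vb hrank hsub hon.
have PrSub : forall w, (P w <= S)%MS := Pr_sub _ _ A m Nk S vb hsub.
have PrCoef : forall w k, bform A (P w) (vb k) = bform A w (vb k) := Pr_coef _ _ A Nk vb hon.
have PrOrth : forall w z, (z <= S)%MS -> bform A (w - P w) z = 0 :=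
  Pr_orth _ _ A m Nk S vb hrank hsub hon.
have distE : forall w, distA A S w = normf A (w - P w) :=
  distA_eq _ _ A m Nk S vb hA hrank hsub hon.
have symA : forall u w, bform A u w = bform A w u := fun u w => bformC _ _ A u w hA.1.
have symM : forall u w, bform M u w = bform M w u := fun u w => bformC _ _ M u w hM.1.
have LA : forall f w, bform A (Linv A M f) w = bform M f w :=
  fun f w => Linv_bform _ _ A M f w hU.
have hv0 : v != 0.
  by apply/eqP => h; move: hvv; rewrite h bform0l => /eqP; rewrite eq_sym oner_eq0.
have hn : exists w : 'rV[R]_n, w != 0 by exists v.
have hl1 := lambda1_pos _ _ A M hA hM hn.
have hl1le := lambda1_le _ _ A M hA hM.
have [heta0 hetab] := eta_bound _ _ A M m Nk S vb hA hM hrank hsub hon hn.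
set l1 := lambda1 A M in hl1 hl1le *.
set eta := etaV A M S in heta0 hetab *.
set dl := delta_gap lb i lam in hdpos *.
have hMv : 0 < bform M v v := hM.2 v hv0.
have hlam : lam * bform M v v = 1 by rewrite -heig.
have lam0 : lam != 0.
  by apply/eqP => h; move: hlam; rewrite h mul0r => /eqP; rewrite eq_sym oner_eq0.
pose a := fun j => bform A v (vb j).
have hEv : E v = a i *: vb i.
  have [c hc] := hE1 v; have h2 := hE2 v.
  by rewrite hc bformZl hon eqxx mulr1 in h2; rewrite hc h2.
set e := v - P v.
set d := P v - E v.
have hdS : (d <= S)%MS.
  by apply: subS; [apply: PrSub | rewrite hEv; apply: scalemx_sub; apply: hsub].
have hd_coef : forall k, bform A d (vb k) = if k == i then 0 else a k.
  move=> k; rewrite /d bformBl PrCoef hEv bformZl hon eq_sym.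
  have [->|hk] := eqVneq k i; first by rewrite mulr1 subrr.
  by rewrite mulr0 subr0.
have qsum : forall x, (x <= S)%MS -> bform A x x = \sum_k bform A x (vb k) ^+ 2.
  move=> x hx; rewrite {2}(PrS x hx) /P /Pr bform_sumr.
  by apply: eq_bigr => k _; rewrite bformZr expr2.
have hMv_k : forall k, bform M v (vb k) = a k / lam.
  by move=> k; rewrite /a /= heig mulrAC mulfV // mul1r.
have hMPv_k : forall k, bform M (P v) (vb k) = a k / lb k.
  move=> k; have := hgal k (P v) (PrSub v).
  rewrite symA PrCoef symM => h.
  by rewrite /a /= h mulrAC mulfV ?mul1r // gt_eqF.
have he_k : forall k, bform M e (vb k) = - (a k * ((lb k)^-1 - lam^-1)).
  by move=> k; rewrite /e bformBl hMv_k hMPv_k mulrBr opprB.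
have hdl : forall k, k != i -> dl <= `|(lb k)^-1 - lam^-1|.
  move=> k hk; apply: ge_inf; last by exists k; split.
  by exists 0 => r [j [_ ->]].
set z := Linv A M e.
set t := bform A (P z) (P z).
have ht_sum : t = \sum_k bform M e (vb k) ^+ 2.
  by rewrite /t qsum ?PrSub //; apply: eq_bigr => k _; rewrite PrCoef LA.
have hqd : dl ^+ 2 * bform A d d <= t.
  rewrite qsum // ht_sum mulr_sumr; apply: ler_sum => k _.
  rewrite hd_coef he_k.
  have [->|hk] := eqVneq k i; first by rewrite /= expr0n mulr0 sqr_ge0.
  rewrite /=.
  set x := (lb k)^-1 - lam^-1.
  have h1 : dl <= `|x| := hdl k hk.
  have h2 : `|x| ^+ 2 = x ^+ 2 by rewrite real_normK ?num_real.
  have h3 := ltW hdpos.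
  have h4 := normr_ge0 x.
  have hx2 : dl ^+ 2 <= x ^+ 2 by nra.
  have ha := sqr_ge0 (a k).
  nra.
set y := Linv A M (P z).
have hPz_t : bform A z (P z) = t.
  have h0 := PrOrth z (P z) (PrSub z); rewrite bformBl in h0.
  by apply/eqP; rewrite -subr_eq0 /t h0.
have ht1 : t = bform A e (y - P y).
  rewrite -hPz_t LA symM -LA symA bformBr (PrOrth v (P y) (PrSub y)) subr0.
  by [].
have hCS1 := bform_CS _ _ A e (y - P y) hA.
have hy := hetab (P z).
have hl1t := hl1le (P z).
have hqe := bform_ge0 _ _ A e hA.
have ht0 : 0 <= t := bform_ge0 _ _ A (P z) hA.
have hqMPz := bform_ge0 _ _ M (P z) hM.
have hqy := bform_ge0 _ _ A (y - P y) hA.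
rewrite -ht1 in hCS1.
have heta2 : 0 <= eta ^+ 2 := sqr_ge0 eta.
have hAN : l1 * t <= eta ^+ 2 * bform A e e.
  have [t0|tpos] := eqVneq t 0; first by rewrite t0 mulr0 mulr_ge0.
  have htp : 0 < t by rewrite lt_def tpos ht0.
  rewrite -(ler_pM2r htp).
  have h5 : bform A (y - P y) (y - P y) * l1 <= eta ^+ 2 * t.
    apply: (le_trans (_ : _ <= eta ^+ 2 * bform M (P z) (P z) * l1)).
      by rewrite ler_wpM2r // ltW.
    by rewrite -mulrA ler_wpM2l // mulrC.
  nra.
have hqd2 : bform A d d <= (l1 * dl ^+ 2)^-1 * eta ^+ 2 * bform A e e.
  have hp : 0 < l1 * dl ^+ 2 by rewrite mulr_gt0 // exprn_gt0.
  rewrite -(ler_pM2l hp) !mulrA mulfV; first nra.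
  by rewrite !mulf_neq0 // gt_eqF.
have hε : E v - v = - (e + d) by rewrite /e /d addrA subrK opprB.
have hqeps : bform A (E v - v) (E v - v) = bform A e e + bform A d d.
  by rewrite hε bformNl bformNr opprK (pyth _ _ A e d hA (PrOrth v d hdS)).
have hv1 : normf A v = 1 by rewrite /normf hvv sqrtr1.
have hdk : normf A e <= delta_k A M S lam.
  apply: ub_le_sup.
    exists (normf A e) => r [u [hu [hu1 ->]]].
    have [c hc] := hsimple u hu.
    rewrite hc normfZ hv1 mulr1 in hu1.
    rewrite hc distE /P Pr_Z -scalerBr normfZ hu1 mul1r.
    by [].
  by exists v; split => //; split => //; rewrite distE.
set K := 1 + (l1 * dl ^+ 2)^-1 * eta ^+ 2.
have hK : 0 <= K.
  by rewrite /K addr_ge0 // mulr_ge0 // invr_ge0 mulr_ge0 // ltW // exprn_gt0.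
have part1 : normf A (E v - v) <= Num.sqrt K * delta_k A M S lam.
  apply: (@le_trans _ _ (Num.sqrt K * normf A e)); last first.
    by rewrite ler_wpM2l // sqrtr_ge0.
  rewrite /normf -sqrtrM // ler_wsqrtr // hqeps /K mulrDl mul1r lerD2l.
  exact: hqd2.
split => //.
set ep := E v - v in hε hqeps *.
set g := Linv A M ep.
have hPgS := PrSub g.
have hdPg : bform A ep (P g) = - bform A d (P g).
  by rewrite hε bformNl bformDl (PrOrth v (P g) hPgS) add0r.
have hqM : bform M ep ep = bform A ep (g - P g) - bform A d (P g).
  have h1 : bform M ep ep = bform A ep g by rewrite symA LA.
  by rewrite h1 bformBr hdPg opprK addrK.
set s := Num.sqrt l1.
have hs : 0 < s by rewrite sqrtr_gt0.
have hs2 : s ^+ 2 = l1 by rewrite sqr_sqrtr // ltW.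
set N0 := normf M ep.
set Ne := normf A ep.
have hN0 : 0 <= N0 by apply: sqrtr_ge0.
have hNe : 0 <= Ne by apply: sqrtr_ge0.
have hN02 : N0 ^+ 2 = bform M ep ep by rewrite sqr_sqrtr // bform_ge0.
have ha := bform_CSn _ _ A ep (g - P g) hA.
have hb := bform_CSn _ _ A d (P g) hA.
have hc : normf A (g - P g) <= eta * N0.
  rewrite /normf /N0 /normf -[eta]ger0_norm // -sqrtr_sqr -sqrtrM ?sqr_ge0 //.
  by apply: ler_wsqrtr; apply: hetab.
have hd : normf A (P g) <= normf A g.
  rewrite /normf; apply: ler_wsqrtr.
  have -> : bform A g g = bform A (g - P g + P g) (g - P g + P g) by rewrite subrK.
  by rewrite (pyth _ _ A _ _ hA (PrOrth g (P g) hPgS)) lerDr bform_ge0.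
have he : s * normf A g <= N0.
  have hg2 : normf A g ^+ 2 = bform M ep g by rewrite sqr_sqrtr ?bform_ge0 // LA.
  have hcs := bform_CSn _ _ M ep g hM.
  have hsg : s * normf M g <= normf A g.
    by rewrite /s /normf -(sqrtrM _ (ltW hl1)); apply: ler_wsqrtr; apply: hl1le.
  have hNg := sqrtr_ge0 (bform A g g).
  have hNMg := sqrtr_ge0 (bform M g g).
  rewrite -/(normf A g) in hNg; rewrite -/(normf M g) in hNMg.
  have hle : normf A g ^+ 2 <= N0 * normf M g.
    by rewrite hg2; apply: le_trans (ler_norm _) hcs.
  have [g0|gpos] := eqVneq (normf A g) 0; first by rewrite g0 mulr0.
  have hgp : 0 < normf A g by rewrite lt_def gpos hNg.
  rewrite -(ler_pM2r hgp).
  nra.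
have hf : normf A d * s * dl <= eta * normf A e.
  have h1 : l1 * (dl ^+ 2 * bform A d d) <= eta ^+ 2 * bform A e e.
    apply: le_trans hAN; rewrite ler_wpM2l //; exact: ltW.
  have h2 := ler_wsqrtr h1.
  rewrite (sqrtrM _ (ltW hl1)) (sqrtrM _ (sqr_ge0 dl)) sqrtr_sqr (ger0_norm (ltW hdpos)) in h2.
  rewrite sqrtrM ?sqr_ge0 // sqrtr_sqr ger0_norm // in h2.
  rewrite -/s -/(normf A d) -/(normf A e) in h2.
  have -> : normf A d * s * dl = s * (dl * normf A d) by ring.
  exact: h2.
have hg : normf A e <= Ne.
  by rewrite /Ne /normf; apply: ler_wsqrtr; rewrite hqeps lerDl bform_ge0.
have hNd := sqrtr_ge0 (bform A d d); rewrite -/(normf A d) in hNd.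
have hNPg := sqrtr_ge0 (bform A (P g) (P g)); rewrite -/(normf A (P g)) in hNPg.
have hNgp := sqrtr_ge0 (bform A (g - P g) (g - P g)); rewrite -/(normf A (g - P g)) in hNgp.
have hNg := sqrtr_ge0 (bform A g g); rewrite -/(normf A g) in hNg.
have hmain : N0 ^+ 2 <= Ne * (eta * N0) + normf A d * normf A g.
  have hb1 : bform A ep (g - P g) <= Ne * (eta * N0).
    apply: le_trans (ler_norm _) _; apply: le_trans ha _.
    by rewrite ler_wpM2l.
  have hb2 : - bform A d (P g) <= normf A d * normf A g.
    apply: (@le_trans _ _ `|bform A d (P g)|); first by rewrite -normrN ler_norm.
    apply: le_trans hb _; by rewrite ler_wpM2l.
  by rewrite hN02 hqM; apply: lerD.
have hcross : normf A d * normf A g * (l1 * dl) <= eta * Ne * N0.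
  rewrite -hs2.
  have hNee := sqrtr_ge0 (bform A e e); rewrite -/(normf A e) in hNee.
  have hsg : 0 <= s * normf A g by rewrite mulr_ge0 // ltW.
  have s1 : (normf A d * s * dl) * (s * normf A g) <= (eta * normf A e) * (s * normf A g).
    by rewrite ler_wpM2r.
  have s2 : (eta * normf A e) * (s * normf A g) <= (eta * normf A e) * N0.
    by rewrite ler_wpM2l // mulr_ge0.
  have s3 : (eta * normf A e) * N0 <= eta * Ne * N0.
    by rewrite ler_wpM2r // ler_wpM2l.
  have -> : normf A d * normf A g * (s ^+ 2 * dl) = (normf A d * s * dl) * (s * normf A g) by ring.
  exact: le_trans s1 (le_trans s2 s3).
have [z0|zpos] := eqVneq N0 0.
  rewrite z0 mulr_ge0 // mulr_ge0 // addr_ge0 // invr_ge0 mulr_ge0 // ltW //.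
have hzp : 0 < N0 by rewrite lt_def zpos hN0.
have hk : 0 < l1 * dl by rewrite mulr_gt0.
set kk := (l1 * dl)^-1.
have hkk : kk * (l1 * dl) = 1 by rewrite mulVf // gt_eqF.
have hkk0 : 0 < kk by rewrite invr_gt0.
have hcross' : normf A d * normf A g <= kk * (eta * Ne * N0).
  rewrite -(ler_pM2r hk) [X in _ <= X]mulrAC hkk mul1r.
  exact: hcross.
rewrite -(ler_pM2r hzp).
nra.
Qed.
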